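(* Let $\mathbf{k}$ be a field whose characteristic is either $0$ or greater than $d$, let $A = \mathbf{k}^{d}$ with standard basis of orthogonal idempotents $e_1,\dots,e_d$, let $M$ be a finite-dimensional $\mathbf{k}$-vector space and let $\phi : A \to \mathrm{End}_{\mathbf{k}}(M)$ be a $\mathbf{k}$-linear map. Put $\alpha_i = \phi(e_i)$ and $T_\phi = x_1 \otimes \alpha_1 + \dots + x_d \otimes \alpha_d \in \mathbf{k}\langle x_1,\dots,x_d\rangle \otimes_{\mathbf{k}} \mathrm{End}_{\mathbf{k}}(M)$. Then $\phi$ is a (unital) $\mathbf{k}$-algebra homomorphism if and only if \[ \chi_d(T_\phi) := \sum_{\sigma \in S_d} (T_\phi - x_{\sigma(1)})(T_\phi - x_{\sigma(2)})\cdots (T_\phi - x_{\sigma(d)}) = 0 \] in $\mathbf{k}\langle x_1,\dots,x_d\rangle \otimes_{\mathbf{k}} \mathrm{End}_{\mathbf{k}}(M)$.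
   Context: Here $\mathbf{k}\langle x_1,\dots,x_d\rangle$ is the free associative algebra (tensor algebra $\mathrm{T}(A^\vee)$) on the dual basis $x_1,\dots,x_d$ of $A^\vee$ to $e_1,\dots,e_d$; in the tensor product $\mathbf{k}\langle x_1,\dots,x_d\rangle \otimes_{\mathbf{k}} \mathrm{End}_{\mathbf{k}}(M)$ the $x_i$ commute with elements of $\mathrm{End}_{\mathbf{k}}(M)$, and $x_{\sigma(j)}$ stands for $x_{\sigma(j)} \otimes \mathrm{id}_M$. The element $\chi_d = \sum_{\sigma\in S_d}(t - x_{\sigma(1)})\cdots(t - x_{\sigma(d)}) \in \mathbf{k}\langle x_1,\dots,x_d,t\rangle$ is the (unnormalized) symmetrized lift to the free algebra of the characteristic polynomial $\prod_{i=1}^d (t - x_i)$ of left multiplication on $A$, and $\chi_d(T_\phi)$ denotes substituting $t = T_\phi$. *)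

(* Defs.v *)
From HB Require Import structures.
From mathcomp Require Import all_boot all_order all_algebra.
From mathcomp Require Import fingroup perm.
Set Implicit Arguments. Unset Strict Implicit. Unset Printing Implicit Defensive.
Import GRing.Theory.
Local Open Scope ring_scope.

(* Model of  k<x_1,...,x_d> (x)_k End_k(M)  with M = k^n, End_k(M) = 'M[k]_n.
   Since k<x> has the k-basis of words in x_1..x_d, this tensor product is
   the direct sum over words w of copies of End(M).  An element is given as a
   formal finite sum  sum_t  (word t.1) (x) (matrix t.2), encoded as a list;
   its coefficient at a word w is the sum of matrices attached to w; it is zero
   iff all its coefficients vanish.  Multiplication is
   (w (x) A)(v (x) B) = wv (x) AB  (the x_i commute with End(M)). *)
Section NCTensor.
Variables (k : fieldType) (d n : nat).

Definition ncm := seq (seq 'I_d * 'M[k]_n).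

Definition nc_coef (p : ncm) (w : seq 'I_d) : 'M[k]_n :=
  \sum_(t <- p | t.1 == w) t.2.

Definition nc_eq0 (p : ncm) : Prop := forall w, nc_coef p w = 0.

Definition nc_add (p q : ncm) : ncm := p ++ q.
Definition nc_sum (ps : seq ncm) : ncm := flatten ps.
Definition nc_opp (p : ncm) : ncm := [seq (t.1, - t.2) | t <- p].
Definition nc_sub (p q : ncm) : ncm := nc_add p (nc_opp q).
Definition nc_mul (p q : ncm) : ncm :=
  [seq (t.1 ++ u.1, t.2 *m u.2) | t <- p, u <- q].
Definition nc_one : ncm := [:: ([::], 1%:M)].
Definition nc_x (i : 'I_d) : ncm := [:: ([:: i], 1%:M)].
Definition nc_prod (ps : seq ncm) : ncm := foldr nc_mul nc_one ps.

Definition T_of (alpha : 'I_d -> 'M[k]_n) : ncm :=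
  [seq ([:: i], alpha i) | i <- enum 'I_d].

Definition chi_T (alpha : 'I_d -> 'M[k]_n) : ncm :=
  nc_sum [seq nc_prod [seq nc_sub (T_of alpha) (nc_x (s j)) | j <- enum 'I_d]
         | s : 'S_d <- enum [set: 'S_d]].

End NCTensor.

Definition std_e (k : fieldType) (d : nat) (i : 'I_d) : {ffun 'I_d -> k^o} :=
  [ffun j => (i == j)%:R].

(* Main.v *)
Require Import Defs.
From HB Require Import structures.
From mathcomp Require Import all_boot all_order all_algebra.
From mathcomp Require Import fingroup perm zify.
Set Implicit Arguments. Unset Strict Implicit. Unset Printing Implicit Defensive.
Import GRing.Theory.
Local Open Scope ring_scope.

Section Coef.
Variables (k : fieldType) (d n : nat).
Local Notation ncm := (ncm k d n).

Lemma coef_cat (p q : ncm) w : nc_coef (p ++ q) w = nc_coef p w + nc_coef q w.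
Proof. by rewrite /nc_coef big_cat. Qed.

Lemma coef_opp (p : ncm) w : nc_coef (nc_opp p) w = - nc_coef p w.
Proof. by rewrite /nc_coef /nc_opp big_map sumrN. Qed.

Lemma coef_nil w : nc_coef ([::] : ncm) w = 0.
Proof. by rewrite /nc_coef big_nil. Qed.

Definition lin (p : ncm) := all (fun t => size t.1 == 1%N) p.

Lemma coef_mul_lin (p q : ncm) w : lin p ->
  nc_coef (nc_mul p q) w =
  if w is a :: w' then nc_coef p [:: a] *m nc_coef q w' else 0.
Proof.
case: w => [|a w'].
  elim: p => [|t p IH] /=; first by rewrite /nc_mul /= coef_nil.
  case/andP=> Ht Hp.
  have -> : nc_mul (t :: p) q = [seq (t.1 ++ u.1, t.2 *m u.2) | u <- q] ++ nc_mul p q by [].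
  rewrite coef_cat IH // addr0 /nc_coef big_map big1 //.
  by case: t Ht => [[|i []] A].
elim: p => [|t p IH] /=; first by rewrite /nc_mul /= !coef_nil mul0mx.
case/andP=> Ht Hp.
have -> : nc_mul (t :: p) q = [seq (t.1 ++ u.1, t.2 *m u.2) | u <- q] ++ nc_mul p q by [].
rewrite coef_cat IH //.
case: t Ht => [[|i []] A] //= _.
rewrite /nc_coef big_map big_cons /=.
rewrite (eq_bigl (fun j => (i == a) && (j.1 == w'))); last by move=> j; rewrite eqseq_cons.
rewrite !eqseq_cons eqxx andbT; case: (i == a) => /=.
  by rewrite mulmxDl -mulmx_sumr.
by rewrite big1 ?add0r.
Qed.

Lemma coef_one w : nc_coef (nc_one k d n) w = if w == [::] then 1%:M else 0.
Proof. by rewrite /nc_coef /nc_one big_cons big_nil addr0 eq_sym; case: (_ == _). Qed.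

Lemma coef_prod (X : Type) (l : seq X) (F : X -> ncm) (g : X -> 'I_d -> 'M[k]_n) :
  (forall x, lin (F x)) -> (forall x c, nc_coef (F x) [:: c] = g x c) ->
  forall w, nc_coef (nc_prod (map F l)) w =
    if size w == size l then \prod_(p <- zip l w) g p.1 p.2 else 0.
Proof.
move=> Hl Hg; elim: l => [|x l IH] w /=.
  rewrite coef_one; case: w => [|a w] //=.
  by rewrite big_nil.
rewrite coef_mul_lin // ; case: w => [|a w] //=.
rewrite Hg IH eqSS; case: (size w == size l).
  by rewrite big_cons mulmxE.
by rewrite mulmx0.
Qed.

Definition gfac (alpha : 'I_d -> 'M[k]_n) (s : 'I_d) (c : 'I_d) : 'M[k]_n :=
  alpha c - (if s == c then 1%:M else 0).

Lemma lin_fac alpha s : lin (nc_sub (T_of alpha) (nc_x k n s)).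
Proof.
rewrite /lin /nc_sub /nc_add all_cat; apply/andP; split.
  by rewrite all_map; apply/allP.
by [].
Qed.

Lemma coef_fac alpha s c : nc_coef (nc_sub (T_of alpha) (nc_x k n s)) [:: c] = gfac alpha s c.
Proof.
rewrite /nc_sub /nc_add coef_cat coef_opp /gfac; congr (_ - _).
  rewrite /nc_coef /T_of big_map.
  rewrite (eq_bigl (pred1 c)); last by move=> i; rewrite /= eqseq_cons andbT.
  by rewrite -big_filter filter_pred1_uniq ?enum_uniq ?mem_enum // big_seq1.
rewrite /nc_coef /nc_x big_cons big_nil addr0 /= eqseq_cons andbT.
by [].
Qed.

Lemma coef_chi alpha w : nc_coef (chi_T alpha) w =
  \sum_(s <- enum [set: 'S_d])
    (if size w == d then \prod_(p <- zip (enum 'I_d) w) gfac alpha (s p.1) p.2 else 0).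
Proof.
rewrite /chi_T /nc_sum.
elim: (enum [set: 'S_d]) => [|s r IH] /=; first by rewrite coef_nil big_nil.
rewrite coef_cat IH big_cons; congr (_ + _).
rewrite (@coef_prod _ _ (fun j => nc_sub (T_of alpha) (nc_x k n (s j))) (fun j c => gfac alpha (s j) c)).
- by rewrite size_enum_ord.
- by move=> x; apply: lin_fac.
- by move=> x c; apply: coef_fac.
Qed.
End Coef.

Section Fwd.
Variables (k : fieldType) (d n : nat) (alpha : 'I_d -> 'M[k]_n).
Hypothesis Horth : forall a b, alpha a *m alpha b = if a == b then alpha a else 0.
Hypothesis Hsum : \sum_a alpha a = 1%:M.

Lemma expand_prod (X : Type) (r : seq X) (f : X -> 'I_d -> k) :
  \prod_(x <- r) (\sum_a f x a *: alpha a) = \sum_a (\prod_(x <- r) f x a) *: alpha a.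
Proof.
elim: r => [|x r IH].
  rewrite big_nil; under eq_bigr => a _ do rewrite big_nil scale1r.
  by rewrite Hsum.
rewrite big_cons IH mulr_suml.
apply: eq_bigr => a _.
rewrite mulr_sumr (bigD1 a) //= [X in _ + X]big1 ?addr0.
  by rewrite big_cons -mulmxE -scalemxAl -scalemxAr Horth eqxx scalerA.
move=> b Hb; rewrite -mulmxE -scalemxAl -scalemxAr Horth.
by rewrite eq_sym (negbTE Hb) !scaler0.
Qed.

Lemma gfac_expand s c :
  gfac alpha s c = \sum_a (((a == c)%:R - (s == c)%:R) *: alpha a).
Proof.
under eq_bigr => a _ do rewrite scalerBl.
rewrite sumrB /gfac; congr (_ - _).
  rewrite (bigD1 c) //= eqxx scale1r big1 ?addr0 //.
  by move=> a Ha; rewrite (negbTE Ha) scale0r.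
rewrite -scaler_sumr Hsum.
by case: (s == c); rewrite ?scale1r ?scale0r.
Qed.

Lemma fwd w : nc_coef (chi_T alpha) w = 0.
Proof.
rewrite coef_chi; apply: big1 => s _; case: ifP => // /eqP Hw.
under eq_bigr => p _ do rewrite gfac_expand.
rewrite expand_prod; apply: big1 => a _.
set P := \prod_(_ <- _) _.
suff -> : P = 0 by rewrite scale0r.
apply/eqP; rewrite /P prodf_seq_eq0; apply/hasP.
set j := (s^-1)%g a.
have x0 : 'I_d := a.
exists (j, nth x0 w j).
  have <- : nth (x0, x0) (zip (enum 'I_d) w) j = (j, nth x0 w j).
    by rewrite nth_zip ?size_enum_ord ?Hw // nth_ord_enum.
  by apply: mem_nth; rewrite size_zip size_enum_ord Hw minnn.
by rewrite /= permKV subrr.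
Qed.
End Fwd.

Section Conv1.
Variables (k : fieldType) (d n : nat) (alpha : 'I_d -> 'M[k]_n).
Hypothesis H0 : forall w, nc_coef (chi_T alpha) w = 0.

Lemma M1 (f : {ffun 'I_d -> 'I_d}) :
  \sum_(s : 'S_d) \prod_(j < d) gfac alpha (s j) (f j) = 0.
Proof.
have := H0 [seq f j | j <- enum 'I_d].
rewrite coef_chi size_map size_enum_ord eqxx.
rewrite -[X in zip X _]map_id zip_map.
under eq_bigr => s _ do rewrite big_map enumT.
rewrite big_enum /=.
rewrite (eq_bigl xpredT) //; last by move=> s; rewrite inE.
Qed.

Lemma scale_prod (X : Type) (r : seq X) (c : X -> k) (M : X -> 'M[k]_n) :
  \prod_(x <- r) (c x *: M x) = (\prod_(x <- r) c x) *: \prod_(x <- r) M x.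
Proof.
elim: r => [|x r IH]; first by rewrite !big_nil scale1r.
by rewrite !big_cons IH -!mulmxE -scalemxAl -scalemxAr scalerA.
Qed.

Lemma M2 (kap : 'I_d -> 'I_d -> k) :
  \sum_(s : 'S_d) \prod_(j < d) (\sum_c kap j c *: gfac alpha (s j) c) = 0.
Proof.
under eq_bigr => s _ do rewrite bigA_distr_bigA.
rewrite exchange_big /=; apply: big1 => f _.
under eq_bigr => s _ do rewrite scale_prod.
by rewrite -scaler_sumr M1 scaler0.
Qed.
End Conv1.

Section Char.
Variables (k : fieldType) (d : nat).
Hypothesis Hchar : [pchar k] =i pred0 \/ (forall p : nat, p \in [pchar k] -> (d < p)%N).

Lemma natr_neq0 m : (0 < m)%N -> (m <= d)%N -> m%:R != 0 :> k.
Proof.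
move=> m0 md; apply/negP => Hm.
have [p Hp] := natf0_pchar m0 Hm.
have pm : (p %| m)%N by rewrite (dvdn_pcharf Hp).
have := dvdn_leq m0 pm.
case: Hchar => [H|H]; first by rewrite H in Hp.
have := H p Hp; lia.
Qed.

Lemma fact_neq0 m : (m <= d)%N -> m`!%:R != 0 :> k.
Proof.
elim: m => [|m IH] Hm; first by rewrite fact0 oner_neq0.
rewrite factS natrM mulf_neq0 //; first by apply: natr_neq0.
by apply: IH; lia.
Qed.

Definition tt_ (i : 'I_d) : k := (i : nat)%:R.

Lemma t_inj : injective tt_.
Proof.
move=> i j; rewrite /tt_ => Hij; apply/val_inj => /=.
have Hi := ltn_ord i; have Hj := ltn_ord j.
case: (ltngtP i j) => // H.
  have := @natr_neq0 (j - i) ltac:(lia) ltac:(lia).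
  by rewrite natrB ?(ltnW H) // Hij subrr eqxx.
have := @natr_neq0 (i - j) ltac:(lia) ltac:(lia).
by rewrite natrB ?(ltnW H) // Hij subrr eqxx.
Qed.
End Char.

Section Poly.
Variables (k : fieldType) (d n' : nat) (alpha : 'I_d -> 'M[k]_n'.+1).
Hypothesis Hchar : [pchar k] =i pred0 \/ (forall p : nat, p \in [pchar k] -> (d < p)%N).
Hypothesis HM2 : forall kap : 'I_d -> 'I_d -> k,
  \sum_(s : 'S_d) \prod_(j < d) (\sum_c kap j c *: gfac alpha (s j) c) = 0.

Local Notation t := (@tt_ k d).
Definition Y := \sum_c t c *: alpha c.
Definition qq : {poly k} := \prod_(i < d) ('X - (t i)%:P).
Definition L (a : 'I_d) : {poly k} := \prod_(i < d | i != a) ('X - (t i)%:P).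
Definition Gm a := horner_mx Y (L a).
Definition lam a := (L a).[t a].

Lemma hY (c : k) : horner_mx Y ('X - c%:P) = Y - c%:M.
Proof. by rewrite rmorphB /= horner_mx_X horner_mx_C. Qed.

Lemma fac1 s : \sum_c t c *: gfac alpha s c = Y - (t s)%:M.
Proof.
rewrite /gfac; under eq_bigr => c _ do rewrite scalerBr.
rewrite sumrB; congr (_ - _).
rewrite (bigD1 s) //= eqxx big1 ?addr0 ?scalemx1 //.
by move=> c Hc; rewrite eq_sym (negbTE Hc) scaler0.
Qed.

Lemma prod_perm (s : 'S_d) : \prod_(j < d) ('X - (t (s j))%:P) = qq.
Proof. by rewrite /qq [RHS](reindex_inj (@perm_inj _ s)). Qed.

Lemma F1 : horner_mx Y qq = 0.
Proof.
have := HM2 (fun _ c => t c).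
rewrite (eq_bigr (fun _ => horner_mx Y qq)); last first.
  move=> s _; rewrite -(prod_perm s) rmorph_prod.
  by apply: eq_bigr => j _; rewrite fac1; symmetry; apply: hY.
have -> : \sum_(s : 'S_d) horner_mx Y qq = horner_mx Y qq *+ #|'S_d|.
  by rewrite -sumr_const.
rewrite card_Sn -scaler_nat => /eqP.
by rewrite scaler_eq0 (negbTE (fact_neq0 Hchar (leqnn d))) => /eqP.
Qed.

Lemma mulXsubC a : L a * ('X - (t a)%:P) = qq.
Proof. by rewrite /qq (bigD1 a) //= mulrC. Qed.

Lemma F2 a c : a != c -> Gm a * Gm c = 0.
Proof.
move=> Hac; rewrite /Gm -rmorphM /=.
have -> : L a = ('X - (t c)%:P) * \prod_(i < d | (i != a) && (i != c)) ('X - (t i)%:P).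
  rewrite /L (bigD1 c) 1?eq_sym //=; congr (_ * _).
by rewrite mulrC mulrA mulXsubC rmorphM /= F1 mul0r.
Qed.

Lemma F3 a : Gm a * Gm a = lam a *: Gm a.
Proof.
have : root (L a - (lam a)%:P) (t a) by rewrite rootE hornerD hornerN hornerC subrr.
case/factor_theorem => h Hh.
have HL : L a = (lam a)%:P + h * ('X - (t a)%:P) by rewrite -Hh addrC subrK.
have E : L a * L a = (lam a)%:P * L a + h * qq.
  by rewrite {2}HL mulrDr [L a * _%:P]mulrC mulrCA mulXsubC.
rewrite /Gm -rmorphM /= E rmorphD !rmorphM /= F1 mulr0 addr0 horner_mx_C.
by rewrite -mulmxE mul_scalar_mx.
Qed.

Lemma lam_neq0 a : lam a != 0.
Proof.
rewrite /lam /L horner_prod; apply/prodf_neq0 => i Hi.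
rewrite hornerD hornerN hornerX hornerC subr_eq0.
by apply/eqP => /(t_inj Hchar) Hia; rewrite Hia eqxx in Hi.
Qed.


Lemma size_qq : size qq = d.+1.
Proof. by rewrite /qq size_prod_XsubC -[index_enum _]enumT size_enum_ord. Qed.

Lemma L_neq0 a : L a != 0.
Proof. by apply/eqP => H; have := lam_neq0 a; rewrite /lam H horner0 eqxx. Qed.

Lemma size_L a : size (L a) = d.
Proof.
have := size_qq; rewrite -(mulXsubC a) size_Mmonic ?L_neq0 ?monicXsubC //.
rewrite size_XsubC addn2 /=; by case.
Qed.

Lemma L_at a b : (L a).[t b] = if a == b then lam a else 0.
Proof.
case: eqP => [->//|/eqP Hab].
rewrite /L horner_prod (bigD1 b) 1?eq_sym //=.
by rewrite hornerD hornerN hornerX hornerC subrr mul0r.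
Qed.

Lemma lagr : (0 < d)%N -> \sum_a (lam a)^-1 *: L a = 1.
Proof.
move=> d0.
apply/eqP; rewrite -subr_eq0; apply/eqP.
set p := _ - 1.
case: (eqVneq p 0) => // Hne.
have Hroots : all (root p) [seq t i | i <- enum 'I_d].
  apply/allP => x /mapP [b _ ->].
  rewrite rootE /p hornerD hornerN hornerC horner_sum.
  under eq_bigr => a _ do rewrite hornerZ L_at.
  rewrite (bigD1 b) //= eqxx mulVf ?lam_neq0 // big1 ?addr0 ?subrr //.
  by move=> a Ha; rewrite (negbTE Ha) mulr0.
have Huniq : uniq [seq t i | i <- enum 'I_d].
  by rewrite map_inj_uniq ?enum_uniq //; apply: t_inj.
have Hs : (size p <= d)%N.
  rewrite /p; apply: (leq_trans (size_polyD _ _)).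
  rewrite size_polyN size_poly1 geq_max; apply/andP; split.
    apply: (leq_trans (size_sum _ _ _)); apply/bigmax_leqP => a _.
    by apply: (leq_trans (size_scale_leq _ _)); rewrite size_L.
  exact: d0.
have := max_poly_roots Hne Hroots Huniq.
rewrite size_map size_enum_ord => H.
have : (d < d)%N by apply: (leq_trans H Hs).
by rewrite ltnn.
Qed.

End Poly.

Section Conv3.
Variables (k : fieldType) (d' n' : nat) (alpha : 'I_d'.+1 -> 'M[k]_n'.+1).
Local Notation d := d'.+1.
Hypothesis Hchar : [pchar k] =i pred0 \/ (forall p : nat, p \in [pchar k] -> (d < p)%N).
Hypothesis HM2 : forall kap : 'I_d -> 'I_d -> k,
  \sum_(s : 'S_d) \prod_(j < d) (\sum_c kap j c *: gfac alpha (s j) c) = 0.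

Local Notation t := (@tt_ k d).
Local Notation G := (Gm alpha).
Local Notation lam := (lam k).
Local Notation L := (L k).
Local Notation Y := (Y alpha).
Local Notation l := (@ord_max d').

Lemma Pw (s : 'S_d) :
  \prod_(i < d') ('X - (t (s (widen_ord (leqnSn d') i)))%:P) = L (s l).
Proof.
apply: (@mulIf _ ('X - (t (s l))%:P)); first by rewrite polyXsubC_eq0.
rewrite /= mulXsubC -(@prod_perm k d s).
by rewrite [RHS]big_ord_recr.
Qed.

Lemma E2 b : \sum_(s : 'S_d) G (s l) * gfac alpha (s l) b = 0.
Proof.
have := HM2 (fun j c => if j == l then (c == b)%:R else t c).
rewrite (eq_bigr (fun s : 'S_d => G (s l) * gfac alpha (s l) b)) //.
move=> s _; rewrite big_ord_recr /= eqxx.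
congr (_ * _).
  rewrite /Gm -Pw rmorph_prod; apply: eq_bigr => i _.
  have -> : (widen_ord (leqnSn d') i == l) = false.
    by apply/negbTE; rewrite -val_eqE /= neq_ltn ltn_ord.
  by rewrite fac1; symmetry; apply: hY.
rewrite (bigD1 b) //= eqxx scale1r big1 ?addr0 //.
by move=> c Hc; rewrite (negbTE Hc) scale0r.
Qed.

Lemma Nk_eq a : \sum_(s : 'S_d) (s l == a)%:R = \sum_(s : 'S_d) (s l == l)%:R :> k.
Proof.
rewrite (reindex_inj (@mulIg _ (tperm l a))); apply: eq_bigr => s _.
by rewrite permM -{2}(tpermL l a) (inj_eq (@perm_inj _ (tperm l a))).
Qed.

Lemma Nk_neq0 a : \sum_(s : 'S_d) (s l == a)%:R != 0 :> k.
Proof.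
have Hsum : \sum_(a0 : 'I_d) \sum_(s : 'S_d) (s l == a0)%:R = d`!%:R :> k.
  rewrite exchange_big /= (eq_bigr (fun _ => 1)); last first.
    move=> s _; rewrite (bigD1 (s l)) //= eqxx big1 ?addr0 //.
    by move=> c Hc; rewrite eq_sym (negbTE Hc).
  have -> : \sum_(s : 'S_d) (1 : k) = 1 *+ #|'S_d| by rewrite -sumr_const.
  by rewrite card_Sn.
rewrite Nk_eq; apply/negP => /eqP H0.
move: Hsum; rewrite (eq_bigr (fun _ => 0)); last by move=> a0 _; rewrite Nk_eq H0.
rewrite big1 // => /esym /eqP.
by rewrite (negbTE (fact_neq0 Hchar (leqnn d))).
Qed.

Lemma F4 a b : G a * alpha b = if a == b then G a else 0.
Proof.
have := congr1 (fun M => G a * M) (E2 b); rewrite /= mulr0 mulr_sumr.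
rewrite (eq_bigr (fun s : 'S_d => (s l == a)%:R *: (lam a *: (G a * gfac alpha a b)))); last first.
  move=> s _; rewrite mulrA; case: eqP => [->|/eqP H].
    by rewrite (F3 Hchar HM2) scale1r scalerAl.
  by rewrite (F2 Hchar HM2) ?mul0r ?scale0r // eq_sym.
rewrite -scaler_suml => /eqP; rewrite scaler_eq0 (negbTE (Nk_neq0 a)) /=.
rewrite scaler_eq0 (negbTE (lam_neq0 Hchar a)) /= /gfac mulrBr subr_eq0 => /eqP ->.
by case: eqP => _; rewrite ?mulr1 ?mulr0.
Qed.

Lemma HG : \sum_a (lam a)^-1 *: G a = 1.
Proof.
have := congr1 (horner_mx Y) (lagr Hchar (ltn0Sn d')).
rewrite raddf_sum rmorph1 => <-; apply: eq_bigr => a _.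
by rewrite /Gm; symmetry; apply: horner_mxZ.
Qed.

Lemma alpha_G b : alpha b = (lam b)^-1 *: G b.
Proof.
rewrite -[alpha b]mul1r -HG mulr_suml (bigD1 b) //= big1 ?addr0.
  by rewrite -scalerAl F4 eqxx.
by move=> a Ha; rewrite -scalerAl F4 (negbTE Ha) scaler0.
Qed.

Lemma orth a b : alpha a *m alpha b = if a == b then alpha a else 0.
Proof.
rewrite mulmxE !alpha_G -scalerAl -scalerAr scalerA.
case: eqP => [<-|/eqP H].
  rewrite (F3 Hchar HM2) scalerA -mulrA mulVf ?mulr1 //.
  exact: lam_neq0.
by rewrite (F2 Hchar HM2) // scaler0.
Qed.

Lemma sum1 : \sum_a alpha a = 1%:M.
Proof.
transitivity (\sum_a (lam a)^-1 *: G a); first by apply: eq_bigr => a _; rewrite -alpha_G.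
exact: HG.
Qed.
End Conv3.

Section Ffun.
Variables (k : fieldType) (d : nat).
Lemma ffmulE (f g : {ffun 'I_d -> k^o}) x : (f * g) x = f x * g x.
Proof. by rewrite /GRing.mul /= ffunE. Qed.
Lemma ff1E x : (1 : {ffun 'I_d -> k^o}) x = 1.
Proof. by rewrite /GRing.one /= ffunE. Qed.

Lemma std_e_mul (i j : 'I_d) : std_e k i * std_e k j = if i == j then std_e k i else 0.
Proof.
apply/ffunP => x; rewrite ffmulE !ffunE.
case: (eqVneq i j) => [<-|H].
  by rewrite ffunE; case: (i == x); rewrite ?mulr1 ?mulr0.
rewrite /GRing.zero /= ffunE.
case: (eqVneq i x) => [<-|]; last by rewrite mul0r.
by rewrite eq_sym (negbTE H) mulr0.
Qed.

Lemma sum_std : \sum_(i < d) std_e k i = 1.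
Proof.
apply/ffunP => x; rewrite sum_ffunE ff1E (bigD1 x) //= ffunE eqxx big1 ?addr0 //.
by move=> i Hi; rewrite ffunE (negbTE Hi).
Qed.

Lemma decomp (a : {ffun 'I_d -> k^o}) : a = \sum_(i < d) a i *: std_e k i.
Proof.
apply/ffunP => x; rewrite sum_ffunE (bigD1 x) //= !ffunE eqxx big1 ?addr0.
  by rewrite [RHS]mulr1.
by move=> i Hi; rewrite !ffunE (negbTE Hi) [LHS]mulr0.
Qed.
End Ffun.

Theorem theoremB (k : fieldType) (d n : nat)
  (Hchar : [pchar k] =i pred0 \/ (forall p : nat, p \in [pchar k] -> (d < p)%N))
  (phi : {linear {ffun 'I_d -> k^o} -> 'M[k]_n}) :
  (phi 1 = 1%:M /\ (forall a b : {ffun 'I_d -> k^o}, phi (a * b) = phi a *m phi b))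
  <-> nc_eq0 (chi_T (fun i : 'I_d => phi (std_e k i))).
Proof.
split.
  case=> H1 HM w; apply: fwd.
    move=> a b; rewrite -HM std_e_mul.
    by case: (a == b); rewrite ?linear0.
  by rewrite -linear_sum sum_std.
move=> H0.
move: H0; case: n phi => [|n'] phi H0.
  by split; [rewrite [LHS]flatmx0 [RHS]flatmx0 | move=> a b; rewrite [LHS]flatmx0 [RHS]flatmx0].
have HM2 := M2 H0.
move: H0 HM2; case: d Hchar phi => [|d'] Hchar phi H0 HM2.
  exfalso; have := HM2 (fun _ _ => 0).
  rewrite (eq_bigr (fun _ => 1)); last by move=> s _; rewrite big_ord0.
  have -> : \sum_(s : 'S_0) (1 : 'M[k]_n'.+1) = 1 *+ #|'S_0| by rewrite -sumr_const.
  by rewrite card_Sn /= => /eqP; rewrite oner_eq0.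
have Horth := orth Hchar HM2.
have Hsum := sum1 Hchar HM2.
split.
  by rewrite -sum_std linear_sum.
move=> a b.
rewrite [in LHS](decomp (a * b)) linear_sum.
under eq_bigr => i _ do rewrite ffmulE linearZ.
rewrite [in RHS](decomp a) [in RHS](decomp b) !(linear_sum phi) mulmx_suml.
apply: eq_bigr => i _.
rewrite mulmx_sumr (bigD1 i) //= big1 ?addr0.
  by rewrite !linearZ /= -scalemxAl Horth eqxx scalerA mulrC.
by move=> j Hj; rewrite !linearZ /= -scalemxAl Horth eq_sym (negbTE Hj) !scaler0.
Qed.
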